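(* Let $\vartheta$ be a primitive semi-compatible random substitution with PF eigenvalue $\lambda$, let $K=\max_{1\leqslant i\leqslant n}\ell_{1,i}$, and for $N\in\mathbb N$ let $I_N=\vartheta(\mathcal L)\cap\mathcal L_N$. For every $\varepsilon>0$ with $\lambda>\varepsilon nK$ there is $N_0\in\mathbb N$ such that for all $N\geqslant N_0$, \[ I_N\;\subset\;\bigcup_{m=\lceil N/(\lambda+\varepsilon nK)\rceil}^{\lfloor N/(\lambda-\varepsilon nK)\rfloor}\vartheta(\mathcal L_m). \]
   Context: Let $\mathcal A=\{a_1,\dots,a_n\}$ be a finite alphabet ($n=\#\mathcal A$), $\mathcal A^+$ the finite non-empty words over $\mathcal A$. A random substitution is a map $\vartheta$ from $\mathcal A$ to finite non-empty subsets of $\mathcal A^+$, extended to words by $\vartheta(u_1\cdots u_m)=\{w_1\cdots w_m: w_k\in\vartheta(u_k)\}$ and to sets of words by unions; powers $\vartheta^m$ are compositions. $|u|$ is the length and $|u|_a$ the number of occurrences of letter $a$ in $u$; $\Phi(u)=(|u|_{a_1},\dots,|u|_{a_n})^\intercal$. $\vartheta$ is semi-compatible if for each $a$ all words in $\vartheta(a)$ have the same $\Phi$; then all words in $\vartheta(a_i)$ have common length $\ell_{1,i}$. Substitution matrix: $M_{ij}=|u|_{a_i}$, $u\in\vartheta(a_j)$; $\vartheta$ is primitive if $M$ is primitive, with Perron–Frobenius eigenvalue $\lambda$. The language $\mathcal L$ is the set of all subwords of words in $\vartheta^m(a)$, $a\in\mathcal A$, $m\in\mathbb N$, and $\mathcal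 L_\ell=\{v\in\mathcal L:|v|=\ell\}$. *)

(* Defs.v *)
From Stdlib Require Import Reals.
From mathcomp Require Import all_boot.

Set Implicit Arguments.
Unset Strict Implicit.
Unset Printing Implicit Defensive.

Section RandomSubstitution.
Variable A : finType.

(* A random substitution is given by th : A -> seq (seq A); the list th a
   represents the finite set vartheta(a) of words. *)

Definition is_rsubst (th : A -> seq (seq A)) : Prop :=
  forall a, 0 < size (th a) /\ forall u, u \in th a -> 0 < size u.

Fixpoint subst_word (th : A -> seq (seq A)) (u : seq A) : seq (seq A) :=
  match u with
  | [::] => [:: [::]]
  | a :: u' => [seq x ++ y | x <- th a, y <- subst_word th u']
  end.

Fixpoint subst_iter (th : A -> seq (seq A)) (m : nat) (a : A) : seq (seq A) :=
  match m with
  | 0 => [:: [:: a]]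
  | m'.+1 => flatten [seq subst_word th w | w <- subst_iter th m' a]
  end.

Definition semi_compatible (th : A -> seq (seq A)) : Prop :=
  forall a u v, u \in th a -> v \in th a -> forall b, count_mem b u = count_mem b v.

Definition subst_mx (th : A -> seq (seq A)) (b a : A) : nat :=
  count_mem b (head [::] (th a)).

Fixpoint mx_pow (th : A -> seq (seq A)) (k : nat) (i j : A) : nat :=
  match k with
  | 0 => (i == j : nat)
  | k'.+1 => \sum_(l : A) subst_mx th i l * mx_pow th k' l j
  end.

Definition primitive_rsubst (th : A -> seq (seq A)) : Prop :=
  exists k, 0 < k /\ forall i j, 0 < mx_pow th k i j.

Definition PF_eigenvalue (th : A -> seq (seq A)) (lam : R) : Prop :=
  exists v : A -> R, (forall a, Rlt 0 (v a)) /\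
    forall i, \big[Rplus/R0]_(j : A) Rmult (INR (subst_mx th i j)) (v j) = Rmult lam (v i).

Definition in_lang (th : A -> seq (seq A)) (v : seq A) : Prop :=
  0 < size v /\ exists (a : A) (m : nat) (w : seq A), w \in subst_iter th m a /\ infix v w.

Definition Kmax (th : A -> seq (seq A)) : nat :=
  \max_(a : A) size (head [::] (th a)).

Definition in_subst_lang_len (th : A -> seq (seq A)) (m : nat) (w : seq A) : Prop :=
  exists v, in_lang th v /\ size v = m /\ w \in subst_word th v.

Definition in_I (th : A -> seq (seq A)) (N : nat) (w : seq A) : Prop :=
  (exists v, in_lang th v /\ w \in subst_word th v) /\ in_lang th w /\ size w = N.

End RandomSubstitution.

(* Main.v *)
Require Import Defs.
From Stdlib Require Import Reals.
From mathcomp Require Import all_boot all_order all_algebra.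
From mathcomp Require Import Rstruct.
From mathcomp Require Import ring lra.
Set Implicit Arguments. Unset Strict Implicit. Unset Printing Implicit Defensive.
Import Order.TTheory GRing.Theory Num.Theory.

Section Comb.
Variable A : finType.
Variable th : A -> seq (seq A).
Hypothesis hrs : is_rsubst th.
Hypothesis hsc : semi_compatible th.

Definition ell (c : A) := size (head [::] (th c)).

Lemma size_count (u : seq A) : size u = \sum_(b : A) count_mem b u.
Proof.
elim: u => [|x u IH] /=; first by rewrite big1.
rewrite big_split /= IH addnC -[X in X = _]addn1; congr (_ + _).
rewrite (bigD1 x) //= eqxx big1 ?addn0 //.
by move=> b /negPf; rewrite eq_sym => ->.
Qed.

Lemma head_in c : head [::] (th c) \in th c.
Proof. by case: (hrs c); case: (th c) => //= x s _ _; rewrite mem_head. Qed.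

Lemma ell_pos c : 0 < ell c.
Proof. by case: (hrs c) => _ H; apply: H; apply: head_in. Qed.

Lemma count_th c x b : x \in th c -> count_mem b x = subst_mx th b c.
Proof. by move=> hx; rewrite /subst_mx; apply: hsc hx (head_in c) b. Qed.

Lemma size_th c x : x \in th c -> size x = ell c.
Proof.
move=> hx; rewrite /ell !size_count; apply: eq_bigr => b _.
by rewrite (count_th b hx) /subst_mx.
Qed.

Lemma ell_sum c : ell c = \sum_(b : A) subst_mx th b c.
Proof. by rewrite /ell size_count. Qed.

Lemma sw_count u w b : w \in subst_word th u ->
  count_mem b w = sumn [seq subst_mx th b c | c <- u].
Proof.
elim: u w => [|a u IH] w /=; first by rewrite inE => /eqP ->.
case/allpairsP => [[x y]] /= [hx hy ->].
by rewrite count_cat (count_th b hx) (IH _ hy).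
Qed.

Lemma sw_size u w : w \in subst_word th u -> size w = sumn [seq ell c | c <- u].
Proof.
elim: u w => [|a u IH] w /=; first by rewrite inE => /eqP ->.
case/allpairsP => [[x y]] /= [hx hy ->].
by rewrite size_cat (size_th hx) (IH _ hy).
Qed.

Lemma sumn_count (f : A -> nat) u : sumn [seq f c | c <- u] = \sum_(c : A) count_mem c u * f c.
Proof.
elim: u => [|x u IH] /=; first by rewrite big1.
rewrite IH.
under [X in _ = X]eq_bigr => c _ do rewrite mulnDl.
rewrite big_split /=; congr (_ + _).
rewrite (bigD1 x) //= eqxx mul1n big1 ?addn0 //.
by move=> c /negPf; rewrite eq_sym => ->.
Qed.

Lemma iter_count k a w b : w \in subst_iter th k a -> count_mem b w = mx_pow th k b a.
Proof.
elim: k a w b => [|k IH] a w b /=.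
  by rewrite inE => /eqP -> /=; rewrite eq_sym addn0.
case/flatten_mapP => w' hw' hw.
rewrite (sw_count b hw) sumn_count; apply: eq_bigr => c _.
by rewrite (IH _ _ _ hw') mulnC.
Qed.

Lemma iter_size k a w : w \in subst_iter th k a -> size w = \sum_(b : A) mx_pow th k b a.
Proof. by move=> h; rewrite size_count; apply: eq_bigr => b _; apply: iter_count. Qed.

Lemma sw_cat u1 u2 w : w \in subst_word th (u1 ++ u2) ->
  exists w1 w2, [/\ w = w1 ++ w2, w1 \in subst_word th u1 & w2 \in subst_word th u2].
Proof.
elim: u1 w => [|a u1 IH] w /=.
  by move=> h; exists [::], w; rewrite inE.
case/allpairsP => [[x y]] /= [hx hy ->].
have [y1 [y2 [-> h1 h2]]] := IH _ hy.
exists (x ++ y1), y2; split => //; first by rewrite catA.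
by apply: (allpairs_f (fun x y => x ++ y)).
Qed.

Lemma sw_flatten (P : seq A -> Prop) bs' w : (forall b', b' \in bs' -> P b') ->
  w \in subst_word th (flatten bs') ->
  exists bs, w = flatten bs /\ forall b, b \in bs -> exists b', P b' /\ b \in subst_word th b'.
Proof.
elim: bs' w => [|b' bs' IH] w hP /=.
  by rewrite inE => /eqP ->; exists [::].
case/sw_cat => [w1 [w2 [-> h1 h2]]].
have [bs [-> H]] := IH w2 (fun b hb => hP b ltac:(by rewrite inE hb orbT)) h2.
exists (w1 :: bs); split => // b; rewrite inE => /orP [/eqP -> |hb]; last exact: H.
by exists b'; split => //; apply: hP; rewrite mem_head.
Qed.

Lemma iter_blocks t k a w : w \in subst_iter th (t + k) a ->
  exists bs, w = flatten bs /\ forall b, b \in bs -> exists c, b \in subst_iter th k c.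
Proof.
elim: k w => [|k IH] w.
  rewrite addn0 => _; exists [seq [:: c] | c <- w]; split.
    by elim: w => //= x w <-.
  by move=> b /mapP [c _ ->]; exists c; rewrite /= mem_head.
rewrite addnS /= => /flatten_mapP [w' hw' hw].
have [bs' [E H]] := IH _ hw'.
rewrite E in hw.
have [bs [-> H2]] := sw_flatten (P := fun b' => exists c, b' \in subst_iter th k c) H hw.
exists bs; split => // b /H2 [b' [[c hc] hb]].
by exists c => /=; apply/flatten_mapP; exists b'.
Qed.

End Comb.

Local Open Scope ring_scope.

Section Anal.
Variable A : finType.
Variable th : A -> seq (seq A).

Lemma mx_pow_add p k i j : mx_pow th (p + k) i j = (\sum_l mx_pow th p i l * mx_pow th k l j)%N.
Proof.
elim: p i j => [|p IH] i j /=.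
  rewrite add0n (bigD1 i) //= eqxx mul1n big1 ?addn0 //.
  by move=> l /negPf; rewrite eq_sym => ->.
under eq_bigr => l _ do rewrite IH big_distrr.
rewrite exchange_big /=; apply: eq_bigr => l _.
by rewrite big_distrl; apply: eq_bigr => l' _; rewrite mulnA.
Qed.

Variable lam : R.
Variable r : A -> R.
Hypothesis hr : forall a, 0 < r a.
Hypothesis heig : forall i, \sum_j (subst_mx th i j)%:R * r j = lam * r i.

Lemma eig_pow p i : \sum_j (mx_pow th p i j)%:R * r j = lam ^+ p * r i.
Proof.
elim: p i => [|p IH] i /=.
  rewrite (bigD1 i) //= eqxx mul1r big1 ?addr0 ?expr0 ?mul1r //.
  by move=> l /negPf; rewrite eq_sym => ->; rewrite mul0r.
under eq_bigr => j _ do rewrite natr_sum big_distrl.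
rewrite exchange_big /=.
under eq_bigr => l _ do (under eq_bigr => j _ do rewrite natrM -mulrA; rewrite -big_distrr /= IH).
rewrite exprS.
transitivity (lam ^+ p * \sum_l (subst_mx th i l)%:R * r l).
  by rewrite big_distrr; apply: eq_bigr => l _ /=; rewrite mulrCA.
by rewrite heig; ring.
Qed.


Lemma sum_ge_term (f : A -> R) j0 : (forall j, 0 <= f j) -> f j0 <= \sum_j f j.
Proof. by move=> h; rewrite (bigD1 j0) //= lerDl sumr_ge0. Qed.

Variable p : nat.
Variable q : R.
Hypothesis hq : forall i j, q * lam ^+ p * r i <= (mx_pow th p i j)%:R * r j.

Lemma contract (x : A -> R) G F j0 (hb : forall j, G * r j <= x j <= F * r j) i :
  lam ^+ p * (G + q * (x j0 / r j0 - G)) * r i <= \sum_j (mx_pow th p i j)%:R * x j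
  <= lam ^+ p * (F - q * (F - x j0 / r j0)) * r i.
Proof.
have hrj0 : r j0 != 0 by rewrite gt_eqF.
set t := x j0 / r j0.
have ht : x j0 = t * r j0 by rewrite /t divfK.
have [hG hF] : G <= t /\ t <= F.
  by case/andP: (hb j0) => h1 h2; rewrite /t ler_pdivlMr ?ler_pdivrMr.
have hqi := hq i j0.
have hP : forall j, 0 <= (mx_pow th p i j)%:R :> R by move=> j; apply: ler0n.
have eG : \sum_j (mx_pow th p i j)%:R * x j = G * (lam ^+ p * r i) +
   \sum_j (mx_pow th p i j)%:R * (x j - G * r j).
  rewrite -eig_pow big_distrr -big_split /=; apply: eq_bigr => j _; ring.
have eF : \sum_j (mx_pow th p i j)%:R * x j = F * (lam ^+ p * r i) -
   \sum_j (mx_pow th p i j)%:R * (F * r j - x j).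
  rewrite -eig_pow big_distrr -sumrB /=; apply: eq_bigr => j _; ring.
have n1 : forall j, 0 <= x j - G * r j /\ 0 <= F * r j - x j.
  by move=> j; case/andP: (hb j) => h1 h2; rewrite !subr_ge0.
have l1 := @sum_ge_term (fun j => (mx_pow th p i j)%:R * (x j - G * r j)) j0.
have l2 := @sum_ge_term (fun j => (mx_pow th p i j)%:R * (F * r j - x j)) j0.
have {l1}l1 := l1 (fun j => mulr_ge0 (hP j) (proj1 (n1 j))).
have {l2}l2 := l2 (fun j => mulr_ge0 (hP j) (proj2 (n1 j))).
rewrite /= ht in l1 l2.
have m1 : q * lam ^+ p * r i * (t - G) <= (mx_pow th p i j0)%:R * r j0 * (t - G).
  by apply: ler_wpM2r; rewrite ?subr_ge0.
have m2 : q * lam ^+ p * r i * (F - t) <= (mx_pow th p i j0)%:R * r j0 * (F - t).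
  by apply: ler_wpM2r; rewrite ?subr_ge0.
apply/andP; split.
  rewrite eG; apply: le_trans _ (lerD (lexx _) l1).
  have -> : (mx_pow th p i j0)%:R * (t * r j0 - G * r j0) = (mx_pow th p i j0)%:R * r j0 * (t - G) by ring.
  by apply: le_trans _ (lerD (lexx _) m1); rewrite le_eqVlt; apply/orP; left; apply/eqP; ring.
rewrite eF; apply: le_trans (lerB (lexx _) l2) _.
have -> : (mx_pow th p i j0)%:R * (F * r j0 - t * r j0) = (mx_pow th p i j0)%:R * r j0 * (F - t) by ring.
by apply: le_trans (lerB (lexx _) m2) _; rewrite le_eqVlt; apply/orP; left; apply/eqP; ring.
Qed.


Hypothesis hlam : 0 < lam.
Hypothesis hq0 : 0 < q.
Hypothesis hq1 : q <= 1.

Definition col k c i : R := (mx_pow th k i c)%:R.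

Definition Bnd k c D := exists G F, 0 < G /\ (forall j, G * r j <= col k c j <= F * r j) /\ F - G <= D * G.

Lemma col_add k c i : col (p + k) c i = \sum_j (mx_pow th p i j)%:R * col k c j.
Proof. by rewrite /col mx_pow_add natr_sum; apply: eq_bigr => j _; rewrite natrM. Qed.

Lemma step k c D : 0 <= D -> Bnd k c D -> Bnd (p + k) c ((1 - q) * D).
Proof.
move=> hD [G [F [hG0 [hb hFG]]]].
set t := col k c c / r c.
have [hGt hFt] : G <= t /\ t <= F.
  by case/andP: (hb c) => h1 h2; rewrite /t ler_pdivlMr ?ler_pdivrMr.
have hmu : 0 < lam ^+ p by apply: exprn_gt0.
exists (lam ^+ p * (G + q * (t - G))), (lam ^+ p * (F - q * (F - t))).
have hGG : lam ^+ p * G <= lam ^+ p * (G + q * (t - G)).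
  apply: ler_wpM2l; first exact: ltW.
  by rewrite lerDl mulr_ge0 ?subr_ge0 // ltW.
split; first by apply: lt_le_trans hGG; apply: mulr_gt0.
split; first by move=> j; rewrite col_add; apply: contract.
have h1q : 0 <= 1 - q by rewrite subr_ge0.
have e1 : lam ^+ p * (F - q * (F - t)) - lam ^+ p * (G + q * (t - G)) = (lam ^+ p * (1 - q)) * (F - G) by ring.
rewrite e1.
have m1 : (lam ^+ p * (1 - q)) * (F - G) <= (lam ^+ p * (1 - q)) * (D * G).
  by apply: ler_wpM2l => //; apply: mulr_ge0 => //; apply: ltW.
have m2 : ((1 - q) * D) * (lam ^+ p * G) <= ((1 - q) * D) * (lam ^+ p * (G + q * (t - G))).
  by apply: ler_wpM2l => //; apply: mulr_ge0.
apply: le_trans m1 _; apply: le_trans _ m2.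
by rewrite le_eqVlt; apply/orP; left; apply/eqP; ring.
Qed.


Hypothesis hP1 : forall i j, (0 < mx_pow th p i j)%N.
Variables rmin Rmax Pmax : R.
Hypothesis hrmin : 0 < rmin.
Hypothesis hRmax : 0 < Rmax.
Hypothesis hrmin_le : forall a, rmin <= r a.
Hypothesis hRmax_le : forall a, r a <= Rmax.
Hypothesis hPmax : forall i j, (mx_pow th p i j)%:R <= Pmax.

Definition D0 := Pmax * Rmax / rmin.

Lemma base c : Bnd p c D0.
Proof.
have hP0 : 0 <= Pmax by apply: le_trans (hPmax c c); apply: ler0n.
exists (1 / Rmax), (Pmax / rmin); split; first by rewrite divr_gt0.
split.
  move=> j; apply/andP; split.
    apply: (@le_trans _ _ 1); first by rewrite mul1r mulrC ler_pdivrMr // mul1r.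
    by rewrite /col ler1n.
  apply: le_trans (hPmax j c) _.
  rewrite mulrC mulrA ler_pdivlMr // [r j * _]mulrC; apply: ler_wpM2l => //.
rewrite /D0.
have -> : Pmax * Rmax / rmin * (1 / Rmax) = Pmax / rmin.
  by field; apply/andP; split; rewrite gt_eqF.
by rewrite lerBlDr lerDl divr_ge0 // ltW.
Qed.

Lemma iterB c j : Bnd (p + j * p) c ((1 - q) ^+ j * D0).
Proof.
have hD0 : 0 <= D0.
  rewrite /D0; apply: divr_ge0; last exact: ltW.
  apply: mulr_ge0; last exact: ltW.
  by apply: le_trans (hPmax c c); apply: ler0n.
elim: j => [|j IH]; first by rewrite mul0n addn0 expr0 mul1r; apply: base.
rewrite mulSn exprS -mulrA; apply: step => //.
by apply: mulr_ge0 => //; apply: exprn_ge0; rewrite subr_ge0.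
Qed.


Hypothesis hrs : is_rsubst th.
Hypothesis hsc : semi_compatible th.

Lemma ell_r : \sum_b (ell th b)%:R * r b = lam * \sum_i r i.
Proof.
under eq_bigr => b _ do rewrite ell_sum natr_sum big_distrl.
rewrite exchange_big big_distrr /=; apply: eq_bigr => i _; exact: heig.
Qed.

Definition Er (w : seq A) : R := ((sumn [seq ell th c | c <- w])%:R - lam * (size w)%:R)%R.

Lemma blockE k c D w : 0 <= D -> Bnd k c D -> w \in subst_iter th k c ->
  - (lam * D * (size w)%:R) <= Er w <= lam * D * (size w)%:R.
Proof.
move=> hD [G [F [hG0 [hb hFG]]]] hw.
have eL : (sumn [seq ell th c | c <- w])%:R = \sum_b col k c b * (ell th b)%:R.
  rewrite sumn_count natr_sum; apply: eq_bigr => b _.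
  by rewrite natrM (iter_count hrs hsc b hw).
have eS : (size w)%:R = \sum_b col k c b.
  by rewrite (iter_size hrs hsc hw) natr_sum.
rewrite /Er eL eS.
set S := \sum_i r i.
set L := \sum_b col k c b * (ell th b)%:R.
set s := \sum_b col k c b.
have a1 : L <= F * (lam * S).
  rewrite -ell_r mulr_sumr; apply: ler_sum => b _.
  have -> : F * ((ell th b)%:R * r b) = (F * r b) * (ell th b)%:R by ring.
  apply: ler_wpM2r; first exact: ler0n.
  by case/andP: (hb b).
have a2 : G * (lam * S) <= L.
  rewrite -ell_r mulr_sumr; apply: ler_sum => b _.
  have -> : G * ((ell th b)%:R * r b) = (G * r b) * (ell th b)%:R by ring.
  apply: ler_wpM2r; first exact: ler0n.
  by case/andP: (hb b).
have a3 : s <= F * S.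
  by rewrite mulr_sumr; apply: ler_sum => b _; case/andP: (hb b).
have a4 : G * S <= s.
  by rewrite mulr_sumr; apply: ler_sum => b _; case/andP: (hb b).
have hl : 0 <= lam by apply: ltW.
have hS : 0 <= S by apply: sumr_ge0 => i _; apply: ltW.
have m1 : lam * (G * S) <= lam * s by apply: ler_wpM2l.
have m4 : lam * s <= lam * (F * S) by apply: ler_wpM2l.
have m2 : (lam * S) * (F - G) <= (lam * S) * (D * G) by apply: ler_wpM2l => //; apply: mulr_ge0.
have m3 : (lam * D) * (G * S) <= (lam * D) * s by apply: ler_wpM2l => //; apply: mulr_ge0.
apply/andP; split.
  apply: le_trans (lerB a2 m4).
  rewrite (_ : G * (lam * S) - lam * (F * S) = - ((lam * S) * (F - G))); last by ring.
  rewrite lerN2; apply: le_trans m2 _.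
  rewrite (_ : lam * S * (D * G) = (lam * D) * (G * S)); last by ring.
  by apply: le_trans m3 _.
apply: le_trans (lerB a1 m1) _.
rewrite (_ : F * (lam * S) - lam * (G * S) = (lam * S) * (F - G)); last by ring.
apply: le_trans m2 _.
rewrite (_ : lam * S * (D * G) = (lam * D) * (G * S)); last by ring.
by apply: le_trans m3 _.
Qed.

End Anal.

Lemma cat_split (T : Type) (x y u v : seq T) : x ++ y = u ++ v -> (size x <= size u)%N ->
  exists z, u = x ++ z /\ y = z ++ v.
Proof.
elim: x u => [|a x IH] u /=; first by move=> -> _; exists u.
case: u => [|b u] //= [-> e] h.
by have [z [-> ->]] := IH u e h; exists z.
Qed.

Section Infix.
Variable T : eqType.
Variable E : seq T -> R.
Variables C d B : R.
Hypothesis Ecat : forall u v, E (u ++ v) = E u + E v.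
Hypothesis Eb : forall u, - (C * (size u)%:R) <= E u <= C * (size u)%:R.
Hypothesis hC : 0 <= C.
Hypothesis hd : 0 <= d.
Hypothesis hB : 0 <= B.
Definition Qb (b : seq T) := - (d * (size b)%:R) <= E b <= d * (size b)%:R /\ (size b)%:R <= B.

Lemma E0 : E [::] = 0.
Proof. have h := Ecat [::] [::]; rewrite cats0 in h; lra. Qed.

Lemma small_bound u : (size u)%:R <= B -> - (d * (size u)%:R + C * B) <= E u <= d * (size u)%:R + C * B.
Proof.
move=> h; have := Eb u; case/andP => h1 h2.
have m : C * (size u)%:R <= C * B by apply: ler_wpM2l.
have m2 : 0 <= d * (size u)%:R by apply: mulr_ge0 => //; apply: ler0n.
apply/andP; split; lra.
Qed.

Lemma prefix_bound bs p z : (forall b, b \in bs -> Qb b) -> flatten bs = p ++ z ->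
  - (d * (size p)%:R + C * B) <= E p <= d * (size p)%:R + C * B.
Proof.
elim: bs p z => [|b bs IH] p z hQ /=.
  case: p => //= _; rewrite E0 /= mulr0 add0r.
  by apply/andP; split; rewrite ?oppr_le0; apply: mulr_ge0.
move=> e.
have [hb1 hb2] := hQ b (mem_head b bs).
case: (leqP (size p) (size b)) => hs.
  have [z' [eb _]] := cat_split (esym e) hs.
  apply: small_bound; apply: le_trans hb2.
  by rewrite ler_nat eb size_cat leq_addr.
have [p' [ep ef]] := cat_split e (ltnW hs).
have := IH p' z (fun b' h => hQ b' ltac:(by rewrite inE h orbT)) ef.
rewrite ep Ecat size_cat natrD => /andP [h1 h2].
case/andP: hb1 => h3 h4.
apply/andP; split; lra.
Qed.

Lemma infix_bound bs v x y : (forall b, b \in bs -> Qb b) -> flatten bs = x ++ v ++ y ->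
  - (d * (size v)%:R + (C * B + C * B)) <= E v <= d * (size v)%:R + (C * B + C * B).
Proof.
have hCB : 0 <= C * B by apply: mulr_ge0.
elim: bs x => [|b bs IH] x hQ /=.
  case: x => //=; case: v => //= _; rewrite E0 /= mulr0 add0r.
  by apply/andP; split; rewrite ?oppr_le0 ?addr_ge0.
move=> e.
have [hb1 hb2] := hQ b (mem_head b bs).
case: (leqP (size b) (size x)) => hs.
  have [x' [ex ef]] := cat_split e hs.
  exact: IH x' (fun b' h => hQ b' ltac:(by rewrite inE h orbT)) ef.
have [s [eb evy]] := cat_split (esym e) (ltnW hs).
have hsb : (size s)%:R <= B.
  by apply: le_trans hb2; rewrite ler_nat eb size_cat leq_addl.
case: (leqP (size v) (size s)) => hvs.
  have [z' [es _]] := cat_split evy hvs.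
  have := small_bound (u := v) (le_trans _ hsb).
  rewrite ler_nat es size_cat leq_addr => /(_ isT) /andP [h1 h2].
  apply/andP; split; lra.
have [p' [ev ef]] := cat_split (esym evy) (ltnW hvs).
have := prefix_bound (fun b' h => hQ b' ltac:(by rewrite inE h orbT)) ef.
case/andP => h1 h2.
have := Eb s; case/andP => h3 h4.
have m : C * (size s)%:R <= C * B by apply: ler_wpM2l.
have m2 : 0 <= d * (size s)%:R by apply: mulr_ge0 => //; apply: ler0n.
move: h1 h2; rewrite ev Ecat size_cat natrD mulrDr => h1 h2.
apply/andP; split; lra.
Qed.

End Infix.

Lemma upper_bd (I : finType) (f : I -> R) : (forall a, 0 <= f a) -> forall a, f a <= 1 + \sum_b f b.
Proof.
move=> h a; rewrite (bigD1 a) //=.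
have : 0 <= \sum_(b | b != a) f b by apply: sumr_ge0.
lra.
Qed.

Lemma lower_bd (I : finType) (f : I -> R) : (forall a, 0 < f a) ->
  0 < 1 / (1 + \sum_b 1 / f b) /\ forall a, 1 / (1 + \sum_b 1 / f b) <= f a.
Proof.
move=> h.
have hS : 0 <= \sum_b 1 / f b by apply: sumr_ge0 => b _; rewrite divr_ge0 // ltW.
have hS1 : 0 < 1 + \sum_b 1 / f b by lra.
split; first by rewrite divr_gt0.
move=> a; rewrite ler_pdivrMr //.
have := @upper_bd I (fun b => 1 / f b) (fun b => ltW (divr_gt0 ltr01 (h b))) a.
by rewrite ler_pdivrMr // mulrC.
Qed.

Lemma bern (q : R) j : 0 <= q -> q <= 1 -> (1 - q) ^+ j * (1 + j%:R * q) <= 1.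
Proof.
move=> h0 h1; elim: j => [|j IH]; first by rewrite expr0 mul0r addr0 mul1r.
apply: le_trans IH.
have hg : 0 <= (1 - q) ^+ j by apply: exprn_ge0; lra.
rewrite exprSr -mulrA; apply: ler_wpM2l => //.
have hq2 : 0 <= q * q by apply: mulr_ge0.
have hj : 0 <= j%:R * (q * q) by apply: mulr_ge0 => //; apply: ler0n.
rewrite -natr1; lra.
Qed.

Lemma sumn_ell_le (A : finType) (th : A -> seq (seq A)) (u : seq A) :
  (sumn [seq ell th c | c <- u] <= Kmax th * size u)%N.
Proof.
elim: u => [|c u IH] //=.
rewrite mulnS leq_add //.
rewrite /ell /Kmax; exact: leq_bigmax.
Qed.

Lemma Er_cat (A : finType) (th : A -> seq (seq A)) lam u v : Er th lam (u ++ v) = Er th lam u + Er th lam v.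
Proof. by rewrite /Er map_cat sumn_cat size_cat !natrD; ring. Qed.

Lemma main_aux (A : finType) (th : A -> seq (seq A)) (lam eps : R) :
  is_rsubst th -> semi_compatible th -> primitive_rsubst th -> PF_eigenvalue th lam ->
  Rlt 0 eps -> Rlt (Rmult (Rmult eps (INR #|A|)) (INR (Kmax th))) lam ->
  exists N0 : nat, forall N : nat, (N0 <= N)%N ->
    forall w : seq A, in_I th N w ->
      exists m : nat,
        Rle (Rdiv (INR N) (Rplus lam (Rmult (Rmult eps (INR #|A|)) (INR (Kmax th))))) (INR m) /\
        Rle (INR m) (Rdiv (INR N) (Rminus lam (Rmult (Rmult eps (INR #|A|)) (INR (Kmax th))))) /\
        in_subst_lang_len th m w.
Proof.
move=> hrs hsc [p [hp0 hP]] [r [hr0 heig0]] heps0 hlt0.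
case: (pickP (fun _ : A => true)) => [a0 _ | hA]; last first.
  by exists 0%N => N _ w [_ [[_ [a _]] _]]; have := hA a.
have hr : forall a, 0 < r a by move=> a; apply/RltP.
have heig : forall i, \sum_j (subst_mx th i j)%:R * r j = lam * r i.
  move=> i; rewrite -RmultE -(heig0 i).
  by apply: eq_bigr => j _; rewrite INRE.
have heps : 0 < eps by apply/RltP.
have hlt : eps * #|A|%:R * (Kmax th)%:R < lam by move/RltP: hlt0; rewrite !RmultE !INRE.
have hK : (0 < Kmax th)%N.
  apply: leq_trans (ell_pos hrs a0) _; rewrite /ell /Kmax; exact: leq_bigmax.
have hn : (0 < #|A|)%N by apply/card_gt0P; exists a0.
have hdel : 0 < eps * #|A|%:R * (Kmax th)%:R by rewrite !mulr_gt0 // ltr0n.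
have hlam : 0 < lam by apply: lt_trans hlt.
have [hrmin hrmin_le] := lower_bd hr.
set rmin := 1 / (1 + \sum_b 1 / r b) in hrmin hrmin_le.
have hRmax_le := upper_bd (fun a => ltW (hr a)).
set Rmax := 1 + \sum_b r b in hRmax_le.
have hRmax : 0 < Rmax by apply: lt_le_trans (hr a0) (hRmax_le a0).
have hPmax0 := @upper_bd _ (fun ij : A * A => (mx_pow th p ij.1 ij.2)%:R) (fun _ => ler0n _ _).
set Pmax := 1 + _ in hPmax0.
have hPmax : forall i j, (mx_pow th p i j)%:R <= Pmax by move=> i j; exact: (hPmax0 (i, j)).
have hmu : 0 < lam ^+ p by apply: exprn_gt0.
set q := rmin / (lam ^+ p * Rmax + rmin).
have hden : 0 < lam ^+ p * Rmax + rmin by apply: addr_gt0 => //; apply: mulr_gt0.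
have hq0 : 0 < q by apply: divr_gt0.
have hmR : 0 < lam ^+ p * Rmax by apply: mulr_gt0.
have hq1 : q <= 1 by rewrite /q ler_pdivrMr // mul1r; lra.
have eqq : q * (lam ^+ p * Rmax + rmin) = rmin by rewrite /q divfK // gt_eqF.
have hq : forall i j, q * lam ^+ p * r i <= (mx_pow th p i j)%:R * r j.
  move=> i j.
  have m1 : (q * lam ^+ p) * r i <= (q * lam ^+ p) * Rmax.
    by apply: ler_wpM2l; [apply: mulr_ge0; apply: ltW|].
  have m2 : 0 <= q * rmin by apply: mulr_ge0; apply: ltW.
  have m3 : 1 * r j <= (mx_pow th p i j)%:R * r j.
    by apply: ler_wpM2r; [apply: ltW|rewrite ler1n].
  have := hrmin_le j.
  lra.
set del := eps * #|A|%:R * (Kmax th)%:R in hlt hdel *.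
set d := del / 2.
have hd : 0 < d by rewrite /d divr_gt0.
set DD := D0 rmin Rmax Pmax.
have hD0 : 0 <= DD.
  rewrite /DD /D0; apply: divr_ge0; last exact: ltW.
  apply: mulr_ge0; last exact: ltW.
  by apply: le_trans (hPmax a0 a0); apply: ler0n.
have hX : 0 <= lam * DD / (d * q) by apply: divr_ge0; [apply: mulr_ge0; [apply: ltW|]|apply: ltW; apply: mulr_gt0].
set jj := Num.Def.archi_bound (lam * DD / (d * q)).
have hjj := archi_boundP hX; rewrite -/jj in hjj.
have hjj2 : lam * DD < jj%:R * (d * q) by rewrite -ltr_pdivrMr //; apply: mulr_gt0.
set g := (1 - q) ^+ jj.
have hg : 0 <= g by apply: exprn_ge0; lra.
have hbern : g * (1 + jj%:R * q) <= 1 by apply: bern => //; apply: ltW.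
have hDj : lam * (g * DD) <= d.
  have m1 : g * (lam * DD) <= g * (jj%:R * (d * q)) by apply: ler_wpM2l => //; apply: ltW.
  have m2 : d * (g * (1 + jj%:R * q)) <= d * 1 by apply: ler_wpM2l => //; apply: ltW.
  have m3 : 0 <= d * g by apply: mulr_ge0 => //; apply: ltW.
  lra.
have hgD : 0 <= g * DD by apply: mulr_ge0.
set k := (p + jj * p)%N.
have hBnd : forall c, Bnd th r k c (g * DD).
  by move=> c; apply: (iterB hr heig hq hlam hq0 hq1 hP hrmin hRmax hrmin_le hRmax_le hPmax).
have hBk0 := @upper_bd _ (fun c => \sum_i (mx_pow th k i c)%:R) (fun _ => sumr_ge0 _ (fun _ _ => ler0n _ _)).
set Bk := 1 + _ in hBk0.
have hBk : forall c b, b \in subst_iter th k c -> (size b)%:R <= Bk.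
  by move=> c b hb; rewrite (iter_size hrs hsc hb) natr_sum; apply: hBk0.
have hBkp : 0 <= Bk by apply: le_trans (hBk0 a0); apply: sumr_ge0 => i _; apply: ler0n.
have hB20 := @upper_bd _ (fun tc : 'I_k * A => \sum_i (mx_pow th tc.1 i tc.2)%:R) (fun _ => sumr_ge0 _ (fun _ _ => ler0n _ _)).
set B2 := 1 + _ in hB20.
have hB2 : forall t c w, (t < k)%N -> w \in subst_iter th t c -> (size w)%:R <= B2.
  move=> t c w ht hw; rewrite (iter_size hrs hsc hw) natr_sum.
  exact: (hB20 (Ordinal ht, c)).
have hB2p : 0 <= B2.
  apply: le_trans (hB2 0%N a0 [:: a0] _ _); [exact: ler0n | | by rewrite /= mem_head].
  by rewrite /k addn_gt0 hp0.
set C := (Kmax th)%:R + lam.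
have hC : 0 <= C by rewrite /C addr_ge0 // ?ler0n // ltW.
have Ecat : forall u v, Er th lam (u ++ v) = Er th lam u + Er th lam v.
  move=> u v; rewrite /Er map_cat sumn_cat size_cat !natrD; clear -u v; ring.
have EbC : forall u, - (C * (size u)%:R) <= Er th lam u <= C * (size u)%:R.
  move=> u; rewrite /Er /C.
  have h1 : (sumn [seq ell th c | c <- u])%:R <= (Kmax th)%:R * (size u)%:R :> R.
    by rewrite -natrM ler_nat sumn_ell_le.
  have h2 : 0 <= (sumn [seq ell th c | c <- u])%:R :> R by apply: ler0n.
  have h3 : 0 <= lam * (size u)%:R by apply: mulr_ge0; [apply: ltW|apply: ler0n].
  have h4 : 0 <= (Kmax th)%:R * (size u)%:R :> R by apply: mulr_ge0; apply: ler0n.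
  apply/andP; split; lra.
set Cst := (C * Bk + C * Bk) + C * B2.
have hCst : 0 <= Cst by rewrite /Cst !addr_ge0 // mulr_ge0.
have hY : 0 <= (Kmax th)%:R * Cst / d by apply: divr_ge0; [apply: mulr_ge0 => //; apply: ler0n|apply: ltW].
exists (Num.Def.archi_bound ((Kmax th)%:R * Cst / d)) => N hN w [[v [hv hwv]] [_ hsz]].
have hEv : - (d * (size v)%:R + Cst) <= Er th lam v <= d * (size v)%:R + Cst.
  case: (hv) => hv0 [a [t [w' [hw' hinf]]]].
  case/infixP: hinf => x [y ew'].
  have hdv : 0 <= d * (size v)%:R by apply: mulr_ge0; [apply: ltW|apply: ler0n].
  case: (leqP k t) => hkt.
    rewrite -(subnK hkt) in hw'.
    have [bs [ebs hbs]] := iter_blocks hw'.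
    have hQ : forall b, b \in bs -> Qb (Er th lam) d Bk b.
      move=> b /hbs [c hc]; split; last exact: hBk hc.
      have := blockE hr heig hlam hrs hsc hgD (hBnd c) hc.
      have m : lam * (g * DD) * (size b)%:R <= d * (size b)%:R by apply: ler_wpM2r => //; apply: ler0n.
      case/andP => h1 h2; apply/andP; split; lra.
    have := infix_bound Ecat EbC hC (ltW hd) hBkp hQ (etrans (esym ebs) ew').
    have m : 0 <= C * B2 by apply: mulr_ge0.
    case/andP => h1 h2; apply/andP; split; rewrite /Cst; lra.
  have hsv : (size v)%:R <= B2.
    apply: le_trans (hB2 t a w' hkt hw'); rewrite ler_nat ew' !size_cat.
    by rewrite addnCA leq_addr.
  have m : C * (size v)%:R <= C * B2 by apply: ler_wpM2l.
  have m2 : 0 <= C * Bk by apply: mulr_ge0.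
  have := EbC v; case/andP => h1 h2; apply/andP; split; rewrite /Cst; lra.
have hNv : N = sumn [seq ell th c | c <- v] by rewrite -hsz (sw_size hrs hsc hwv).
have hNK : (N <= Kmax th * size v)%N by rewrite hNv sumn_ell_le.
have hYN := archi_boundP hY.
have hN' : (Kmax th)%:R * Cst / d < N%:R by apply: lt_le_trans hYN _; rewrite ler_nat.
rewrite ltr_pdivrMr // in hN'.
have hNK' : N%:R * d <= (Kmax th)%:R * ((size v)%:R * d).
  rewrite mulrA -natrM; apply: ler_wpM2r; [exact: ltW hd | by rewrite ler_nat].
have hCm : Cst < (size v)%:R * d.
  have hK' : 0 < (Kmax th)%:R :> R by rewrite ltr0n.
  rewrite -(ltr_pM2l hK'); apply: lt_le_trans hN' hNK'.
move: hEv; rewrite /Er -hNv => /andP [h1 h2].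
have hdd : del = d + d by rewrite /d; field.
exists (size v); split; [|split].
- rewrite RdivE RplusE !RmultE !INRE -/del; apply/RleP.
  rewrite ler_pdivrMr; last by lra.
  rewrite hdd; lra.
- rewrite RdivE RminusE !RmultE !INRE -/del; apply/RleP.
  rewrite ler_pdivlMr; last by lra.
  rewrite hdd; lra.
- by exists v.
Qed.

Local Close Scope ring_scope.

Theorem mainTheorem5 (A : finType) (th : A -> seq (seq A)) (lam eps : R) :
  is_rsubst th -> semi_compatible th -> primitive_rsubst th -> PF_eigenvalue th lam ->
  Rlt 0 eps -> Rlt (Rmult (Rmult eps (INR #|A|)) (INR (Kmax th))) lam ->
  exists N0 : nat, forall N : nat, N0 <= N ->
    forall w : seq A, in_I th N w ->
      exists m : nat,
        Rle (Rdiv (INR N) (Rplus lam (Rmult (Rmult eps (INR #|A|)) (INR (Kmax th))))) (INR m) /\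
        Rle (INR m) (Rdiv (INR N) (Rminus lam (Rmult (Rmult eps (INR #|A|)) (INR (Kmax th))))) /\
        in_subst_lang_len th m w.
Proof. exact: main_aux. Qed.
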